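(* There is a function $f\colon\mathbb{N}\times\mathbb{N}\to\mathbb{N}$ such that for every prime power $q$ and every positive integer $k$, every $\mathrm{GF}(q)$-representable matroid is $(f(q,k),k)$-weakly base orderable.
   Context: For a positive integer $k$, an ordered pair $(B_1,B_2)$ of bases has the $k$-exchange property if there exist pairwise disjoint nonempty $X_1,\dots,X_k\subseteq B_1\setminus B_2$ and pairwise disjoint nonempty $Y_1,\dots,Y_k\subseteq B_2\setminus B_1$ such that $(B_1\setminus\bigcup_{i\in Z}X_i)\cup\bigcup_{i\in Z}Y_i$ is a basis for every $Z\subseteq[k]$. A matroid is $(\alpha,k)$-weakly base orderable if every ordered pair $(B_1,B_2)$ of bases with $|B_1\setminus B_2|\ge\alpha$ has the $k$-exchange property. *)

(* Defs.v *)
From HB Require Import structures.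
From mathcomp Require Import all_boot all_order all_algebra all_field.
Set Implicit Arguments. Unset Strict Implicit. Unset Printing Implicit Defensive.
Import GRing.Theory.
Local Open Scope ring_scope.

(* A matroid on a finite ground set E is given by its set of bases Bs. *)

(* Column matroid of a vector configuration v : E -> F^n.
   A subset I is independent iff the family (v e)_{e in I} is linearly
   independent (with multiplicity: [free] on a sequence counts repeats). *)
Definition col_indep (F : fieldType) (n : nat) (E : finType)
    (v : E -> 'rV[F]_n) (I : {set E}) : bool :=
  free [seq v e | e <- enum I].

Definition col_basis (F : fieldType) (n : nat) (E : finType)
    (v : E -> 'rV[F]_n) (B : {set E}) : Prop :=
  col_indep v B /\ (forall J : {set E}, B \subset J -> col_indep v J -> J = B).

Definition representable_over (F : fieldType) (E : finType)
    (Bs : {set {set E}}) : Prop :=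
  exists (n : nat) (v : E -> 'rV[F]_n),
    forall B : {set E}, B \in Bs <-> col_basis v B.

Definition prime_power (q : nat) : Prop :=
  exists p e : nat, [/\ prime p, (0 < e)%N & q = (p ^ e)%N].

Definition k_exchange (E : finType) (Bs : {set {set E}}) (k : nat)
    (B1 B2 : {set E}) : Prop :=
  exists (X Y : 'I_k -> {set E}),
    [/\ forall i, X i != set0 /\ X i \subset B1 :\: B2,
        forall i, Y i != set0 /\ Y i \subset B2 :\: B1,
        forall i j, i != j -> [disjoint X i & X j],
        forall i j, i != j -> [disjoint Y i & Y j] &
        forall Z : {set 'I_k},
          (B1 :\: \bigcup_(i in Z) X i) :|: \bigcup_(i in Z) Y i \in Bs].

Definition weakly_base_orderable (E : finType) (Bs : {set {set E}})
    (alpha k : nat) : Prop :=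
  forall B1 B2 : {set E}, B1 \in Bs -> B2 \in Bs ->
    (alpha <= #|B1 :\: B2|)%N -> k_exchange Bs k B1 B2.

(* Main.v *)
Require Import Defs.
From HB Require Import structures.
From mathcomp Require Import all_boot all_order all_algebra all_field.
From mathcomp Require Import zify.
Set Implicit Arguments. Unset Strict Implicit. Unset Printing Implicit Defensive.
Import GRing.Theory.
Local Open Scope ring_scope.

Definition Mx (K : fieldType) (al be ga : K) (i j : nat) : K :=
  if (i < j)%N then al else if i == j then ga else be.

Section Recover.
Variables (K : fieldType) (vT : vectType K) (W : {vspace vT}).
Variables (e : nat -> vT) (T : nat) (al be ga : K).

Lemma sum_delta (g : nat -> vT) m : (m < T)%N ->
  \sum_(i < T) (if (i : nat) == m then g i else 0) = g m.
Proof.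
move=> hm; rewrite (bigD1 (Ordinal hm)) //= eqxx big1 ?addr0 // => i.
by rewrite -val_eqE /= => /negbTE ->.
Qed.

Let f j := \sum_(i < T) Mx al be ga i j *: e i.

Lemma f_diff j : (j.+1 < T)%N ->
  f j.+1 - f j = (ga - be) *: e j.+1 - (ga - al) *: e j.
Proof.
move=> hj; rewrite /f -sumrB.
have -> : \sum_(i < T) (Mx al be ga i j.+1 *: e i - Mx al be ga i j *: e i) =
  \sum_(i < T) ((if (i:nat) == j.+1 then (ga - be) *: e i else 0)
              - (if (i:nat) == j then (ga - al) *: e i else 0)).
  apply: eq_bigr => i _; rewrite /Mx -scalerBl.
  have [lt|gt|eqij] := ltngtP i j.
  - rewrite (_ : (i < j.+1)%N = true); last by lia.
    rewrite (_ : ((i:nat) == j.+1) = false); last by lia.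
    by rewrite subrr scale0r subrr.
  - rewrite (_ : (i < j.+1)%N = false); last by lia.
    by case: ((i:nat) == j.+1); rewrite ?subrr ?scale0r ?subr0.
  - rewrite (_ : (i < j.+1)%N = true); last by lia.
    rewrite (_ : ((i:nat) == j.+1) = false); last by lia.
    by rewrite sub0r -scaleNr opprB.
rewrite sumrB (sum_delta (fun i => (ga - be) *: e i)) //.
by rewrite (sum_delta (fun i => (ga - al) *: e i)) // (ltn_trans (ltnSn j) hj).
Qed.

Lemma recover :
  ga != be -> (ga == al -> ga != 0) ->
  (forall r : K, r != 0 -> \sum_(i < T) r ^+ i = 0) ->
  (forall j, (j < T)%N -> f j \in W) ->
  forall i, (i < T)%N -> e i \in W.
Proof.
move=> hgb hga hgeo hf.
set g := ga - be; set d := ga - al; set r := d / g.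
have gnz : g != 0 by rewrite subr_eq0.
have step : forall j, (j < T)%N -> e j - r ^+ j *: e 0%N \in W.
  elim=> [|j IH] hj; first by rewrite expr0 scale1r subrr mem0v.
  have hj' : (j < T)%N by apply: ltn_trans hj.
  have -> : e j.+1 - r ^+ j.+1 *: e 0%N =
      g^-1 *: (f j.+1 - f j) + r *: (e j - r ^+ j *: e 0%N).
    rewrite f_diff // scalerBr !scalerA mulVf // scale1r.
    rewrite scalerBr scalerA -exprS.
    rewrite (mulrC g^-1 d) -/(d / g) -/r.
    by rewrite addrA subrK.
  by apply: memvD; apply: memvZ; [apply: memvB; apply: hf|apply: IH].
move=> i hi.
have T0 : (0 < T)%N by apply: leq_ltn_trans hi.
set c := \sum_(i < T) Mx al be ga i 0 * r ^+ i.
have hc : f 0%N - c *: e 0%N \in W.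
  have -> : f 0%N - c *: e 0%N =
     \sum_(i < T) Mx al be ga i 0 *: (e i - r ^+ i *: e 0%N).
    rewrite /f /c scaler_suml -sumrB; apply: eq_bigr => k _.
    by rewrite scalerBr scalerA.
  by apply: memv_suml => k _; rewrite memvZ // step.
have ce0 : c *: e 0%N \in W.
  by have := memvB (hf 0%N T0) hc; rewrite opprB addrC subrK.
have cnz : c != 0.
  have -> : c = be * \sum_(i < T) r ^+ i + g.
    rewrite /c mulr_sumr.
    have -> : \sum_(i < T) Mx al be ga i 0 * r ^+ i =
       \sum_(i < T) (be * r ^+ i + (if (i:nat) == 0%N then g else 0)).
      apply: eq_bigr => k _; rewrite /Mx ltn0.
      case: eqP => [->|_]; last by rewrite addr0.
      by rewrite ?eqxx expr0 !mulr1 /g addrC subrK.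
    rewrite big_split /=; congr (_ + _).
    by rewrite (bigD1 (Ordinal T0)) //= big1 ?addr0 // => k; rewrite -val_eqE /= => /negbTE ->.
  have [r0|rnz] := eqVneq r 0.
    have d0 : d = 0.
      by move/eqP: r0; rewrite /r mulf_eq0 invr_eq0 (negbTE gnz) orbF => /eqP.
    have hg : ga != 0 by apply: hga; move: d0; rewrite /d => /eqP; rewrite subr_eq0.
    rewrite r0 -(prednK T0) big_ord_recl expr0 big1 ?addr0; last by move=> k _; rewrite expr0n.
    by rewrite mulr1 /g addrC subrK.
  by rewrite hgeo // mulr0 add0r.
have e0W : e 0%N \in W.
  by have := memvZ (c^-1) ce0; rewrite scalerA mulVf // scale1r.
have := memvD (step i hi) (memvZ (r ^+ i) e0W).
by rewrite subrK.
Qed.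

End Recover.

Lemma sub_addl (K : fieldType) (vT : vectType K) (U V W : {vspace vT}) :
  (U <= V)%VS -> (U <= V + W)%VS.
Proof. by move=> h; apply: subv_trans h (addvSl _ _). Qed.
Lemma sub_addr (K : fieldType) (vT : vectType K) (U V W : {vspace vT}) :
  (U <= W)%VS -> (U <= V + W)%VS.
Proof. by move=> h; apply: subv_trans h (addvSr _ _). Qed.
Ltac vle := match goal with
 | |- is_true ((_ + _ <= _)%VS) => rewrite subv_add; apply/andP; split; vle
 | _ => first [ exact: subvv | apply: sub_addl; vle | apply: sub_addr; vle ]
 end.

Section Mat.
Variables (F : finFieldType) (n : nat) (E : finType) (v : E -> 'rV[F]_n).

Definition spanS (A : {set E}) : {vspace 'rV[F]_n} := <<[seq v e | e <- enum A]>>%VS.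

Lemma memS (A : {set E}) e : e \in A -> v e \in spanS A.
Proof. by move=> h; apply: memv_span; apply: map_f; rewrite mem_enum. Qed.

Lemma spanS_subP (A : {set E}) (U : {vspace 'rV[F]_n}) :
  (forall e, e \in A -> v e \in U) -> (spanS A <= U)%VS.
Proof.
move=> h; apply/span_subvP => w /mapP [e he ->]; apply: h; by rewrite -mem_enum.
Qed.

Lemma spanS_mono (A B : {set E}) : A \subset B -> (spanS A <= spanS B)%VS.
Proof. by move=> /subsetP h; apply: spanS_subP => e /h; apply: memS. Qed.

Lemma spanSU (A B : {set E}) : spanS (A :|: B) = (spanS A + spanS B)%VS.
Proof.
apply/eqP; rewrite eqEsubv; apply/andP; split.
  apply: spanS_subP => e; rewrite inE => /orP [h|h].
    by apply: (subvP (addvSl _ _)); apply: memS.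
  by apply: (subvP (addvSr _ _)); apply: memS.
by rewrite subv_add; apply/andP; split; apply: spanS_mono;
  [apply: subsetUl | apply: subsetUr].
Qed.

Lemma dim_spanS (A : {set E}) : (\dim (spanS A) <= #|A|)%N.
Proof. by rewrite /spanS (leq_trans (dim_span _)) // size_map cardE. Qed.

Lemma indepE (A : {set E}) : col_indep v A = (\dim (spanS A) == #|A|).
Proof. by rewrite /col_indep /free size_map -cardE. Qed.

Lemma spanS0 : spanS set0 = 0%VS.
Proof. by rewrite /spanS enum_set0 span_nil. Qed.

Lemma add1_dim (U : {vspace 'rV[F]_n}) w : w \notin U ->
  \dim (U + <[w]>) = (\dim U).+1.
Proof.
move=> hw; apply/eqP; rewrite eqn_leq; apply/andP; split.
  have h1 : (\dim (U + <[w]>) <= \dim U + \dim <[w]>)%N by apply: dimv_add_leqif.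
  have h2 : (\dim <[w]> <= 1)%N by rewrite dim_vline; case: (w != 0).
  lia.
rewrite ltnNge; apply/negP => hle.
have : (U == U + <[w]>)%VS by rewrite eqEdim addvSl.
move/eqP => hU; apply: (negP hw); rewrite hU.
by apply: (subvP (addvSr _ _)); apply: memv_line.
Qed.

Lemma basis_span (B : {set E}) : col_basis v B -> forall e, v e \in spanS B.
Proof.
move=> [hi hmax] e; case: (boolP (e \in B)) => heB; first exact: memS.
case: (boolP (v e \in spanS B)) => // hn.
have hJ : col_indep v (e |: B).
  rewrite indepE cardsU1 heB /= (setUC [set e] B) spanSU /spanS enum_set1 /= -/(spanS B).
  rewrite span_seq1 add1_dim //.
  by move: hi; rewrite indepE => /eqP ->; rewrite add1n.
have := hmax _ (subsetUr _ _) hJ => hEq.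
by move: heB; rewrite -hEq setU11.
Qed.

Lemma basis_dim (B : {set E}) : col_basis v B -> \dim (spanS B) = #|B|.
Proof. by case=> hi _; move: hi; rewrite indepE => /eqP. Qed.

Lemma span_basis (B : {set E}) (U : {vspace 'rV[F]_n}) : col_basis v B ->
  (spanS B <= U)%VS -> forall A : {set E}, (spanS A <= U)%VS.
Proof.
move=> hB hU A; apply: spanS_subP => e _; apply: (subvP hU); exact: basis_span.
Qed.

Lemma basis_card (B1 B2 : {set E}) : col_basis v B1 -> col_basis v B2 -> #|B1| = #|B2|.
Proof.
move=> h1 h2; apply/eqP; rewrite eqn_leq -(basis_dim h1) -(basis_dim h2).
by rewrite !dimvS // (span_basis h1 (subvv _), span_basis h2 (subvv _)).
Qed.

Lemma cbasis_of (B1 T : {set E}) : col_basis v B1 -> (#|T| <= #|B1|)%N ->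
  (forall e, e \in B1 -> v e \in spanS T) -> col_basis v T.
Proof.
move=> hB hT hsp.
have hsub : (spanS B1 <= spanS T)%VS by apply: spanS_subP.
have hd : (#|B1| <= \dim (spanS T))%N by rewrite -(basis_dim hB) dimvS.
have hdT := dim_spanS T.
have dT : \dim (spanS T) = #|T| by apply/eqP; rewrite eqn_leq hdT /=; lia.
split; first by rewrite indepE dT.
move=> J hTJ; rewrite indepE => /eqP hJ.
have : (\dim (spanS J) <= \dim (spanS B1))%N.
  by apply: dimvS; apply: (span_basis hB (subvv _)).
rewrite hJ (basis_dim hB) => hle.
apply/eqP; rewrite eq_sym eqEcard hTJ /=; lia.
Qed.

Lemma indep_sub (A B : {set E}) : A \subset B -> col_indep v B ->
  \dim (spanS A) = #|A|.
Proof.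
move=> hAB; rewrite indepE => /eqP hB.
have hU : A :|: B :\: A = B.
  apply/setP => x; rewrite !inE; case hx: (x \in A) => //=.
  by rewrite (subsetP hAB).
have h1 : #|B :\: A| = (#|B| - #|A|)%N.
  by rewrite cardsD (setIidPr hAB).
have h2 : (#|A| <= #|B|)%N by apply: subset_leq_card.
have h3 : (\dim (spanS B) <= \dim (spanS A) + \dim (spanS (B :\: A)))%N.
  by rewrite -{1}hU spanSU; apply: dimv_add_leqif.
have h4 := dim_spanS (B :\: A); have h5 := dim_spanS A.
lia.
Qed.

Section Coord.
Variables (B1 : {set E}) (hB1 : col_basis v B1).

Lemma coef_ex (y : E) : exists c : {ffun E -> F},
  v y == \sum_(x in B1) c x *: v x.
Proof.
have := basis_span hB1 y; rewrite /spanS span_def big_map big_enum /=.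
move=> /memv_sumP [vs hvs ->].
exists [ffun x => odflt 0 [pick k : F | vs x == k *: v x]].
apply/eqP; apply: eq_bigr => x hx; rewrite ffunE.
case: pickP => [k /eqP -> //|hno].
have [k hk] := vlineP _ _ (hvs x hx).
by move: (hno k); rewrite hk eqxx.
Qed.

Definition coefs (y : E) : {ffun E -> F} :=
  odflt [ffun=> 0] [pick c : {ffun E -> F} | v y == \sum_(x in B1) c x *: v x].
Definition a (y x : E) : F := coefs y x.

Lemma expand y : v y = \sum_(x in B1) a y x *: v x.
Proof.
rewrite /a /coefs; case: pickP => [c /eqP //|hno].
by have [c hc] := coef_ex y; move: (hno c); rewrite hc.
Qed.

Definition Dr (R C : {set E}) : nat :=
  (\dim (spanS C + spanS (B1 :\: R)) - \dim (spanS (B1 :\: R)))%N.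

Lemma dimD_ge (U V : {vspace 'rV[F]_n}) : (\dim V <= \dim (U + V))%N.
Proof. by apply: dimvS; apply: addvSr. Qed.

Lemma D_rm (R C : {set E}) x : x \in R -> R \subset B1 -> (Dr R C <= (Dr (R :\ x) C).+1)%N.
Proof.
move=> hx hR; rewrite /Dr.
have xB : x \in B1 by apply: (subsetP hR).
have -> : B1 :\: (R :\ x) = [set x] :|: (B1 :\: R).
  by apply/setP => z; rewrite !inE; case: (eqVneq z x) => [->|] //=; rewrite xB hx.
set S := spanS (B1 :\: R); set X := spanS [set x]; set Cs := spanS C.
rewrite spanSU -/X -/S.
have h1 : (\dim (Cs + S) <= \dim (Cs + (X + S)))%N.
  by apply: dimvS; vle.
have h2 : (\dim (X + S) <= \dim X + \dim S)%N by apply: dimv_add_leqif.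
have h3 : (\dim X <= 1)%N by rewrite (leq_trans (dim_spanS _)) // cards1.
have h4 := dimD_ge Cs S; have h5 := dimD_ge Cs (X + S).
lia.
Qed.

Lemma D_colU (R C1 C2 : {set E}) : (Dr R (C1 :|: C2) <= Dr R C1 + Dr R C2)%N.
Proof.
rewrite /Dr spanSU.
set S := spanS (B1 :\: R); set X1 := spanS C1; set X2 := spanS C2.
have h := dimv_sum_cap (X1 + S) (X2 + S).
have h1 : (\dim (X1 + X2 + S) <= \dim (X1 + S + (X2 + S)))%N.
  by apply: dimvS; vle.
have h2 : (\dim S <= \dim ((X1 + S) :&: (X2 + S)))%N.
  by apply: dimvS; rewrite subv_cap; apply/andP; split; vle.
have h3 := dimD_ge X1 S; have h4 := dimD_ge X2 S.
lia.
Qed.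

Lemma D_set0 R : Dr R set0 = 0%N.
Proof. by rewrite /Dr spanS0 add0v subnn. Qed.

Lemma D_col_big (T : eqType) (l : seq T) (R : {set E}) (Cf : T -> {set E}) :
  (Dr R (\bigcup_(w <- l) Cf w) <= \sum_(w <- l) Dr R (Cf w))%N.
Proof.
elim: l => [|w l IH]; first by rewrite !big_nil D_set0.
rewrite !big_cons (leq_trans (D_colU _ _ _)) // leq_add2l //.
Qed.

Lemma dim_sub (A : {set E}) : A \subset B1 -> \dim (spanS A) = #|A|.
Proof. by move=> h; apply: indep_sub h _; case: hB1. Qed.

Lemma D_row2 (R1 R2 C : {set E}) : R1 \subset B1 -> R2 \subset B1 ->
  [disjoint R1 & R2] -> (Dr (R1 :|: R2) C <= Dr R1 C + Dr R2 C)%N.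
Proof.
move=> h1 h2 hd; rewrite /Dr.
set S0 := B1 :\: (R1 :|: R2); set S1 := B1 :\: R1; set S2 := B1 :\: R2.
have c0 : #|S0| = (#|B1| - #|R1| - #|R2|)%N.
  rewrite /S0 cardsD (setIidPr _); last by rewrite subUset h1 h2.
  by rewrite cardsU (disjoint_setI0 hd) cards0 subn0 subnDA.
have c1 : #|S1| = (#|B1| - #|R1|)%N by rewrite /S1 cardsD (setIidPr h1).
have c2 : #|S2| = (#|B1| - #|R2|)%N by rewrite /S2 cardsD (setIidPr h2).
have r12 : (#|R1| + #|R2| <= #|B1|)%N.
  have := cardsU R1 R2; rewrite (disjoint_setI0 hd) cards0 subn0 => <-.
  by apply: subset_leq_card; rewrite subUset h1 h2.
rewrite !dim_sub ?subsetDl // -/S0 -/S1 -/S2 c0 c1 c2.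
set Cs := spanS C.
have h := dimv_sum_cap (Cs + spanS S1) (Cs + spanS S2).
have hb : (#|B1| <= \dim (Cs + spanS S1 + (Cs + spanS S2)))%N.
  rewrite -dim_sub //; apply: dimvS; apply: spanS_subP => e he.
  case: (boolP (e \in R1)) => hr.
    have : e \in S2 by rewrite !inE he andbT (disjointFr hd hr).
    by move/(memS); apply: (subvP (sub_addr _ (addvSr _ _))).
  have : e \in S1 by rewrite !inE he hr.
  by move/(memS); apply: (subvP (sub_addl _ (addvSr _ _))).
have hc : (\dim (Cs + spanS S0) <= \dim ((Cs + spanS S1) :&: (Cs + spanS S2)))%N.
  apply: dimvS; rewrite subv_cap; apply/andP; split;
    apply: addvS => //; apply: spanS_mono; rewrite /S0 /S1 /S2;
    apply: setDS; [apply: subsetUl | apply: subsetUr].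
have d0 := dimD_ge Cs (spanS S0); have d1 := dimD_ge Cs (spanS S1);
have d2 := dimD_ge Cs (spanS S2).
rewrite !dim_sub ?subsetDl // -/S0 -/S1 -/S2 c0 c1 c2 in d0 d1 d2.
lia.
Qed.

Lemma D_row0 C : Dr set0 C = 0%N.
Proof.
rewrite /Dr setD0; apply/eqP; rewrite subn_eq0; apply: dimvS.
by rewrite subv_add subvv andbT; apply: (span_basis hB1 (subvv _)).
Qed.

Lemma D_row_big (T : eqType) (l : seq T) (C : {set E}) (Rf : T -> {set E}) :
  uniq l -> (forall w, Rf w \subset B1) ->
  (forall w w', w != w' -> [disjoint Rf w & Rf w']) ->
  (Dr (\bigcup_(w <- l) Rf w) C <= \sum_(w <- l) Dr (Rf w) C)%N.
Proof.
move=> + hsub hdis; elim: l => [|w l IH]; first by rewrite !big_nil D_row0.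
rewrite /= => /andP [hw hu]; rewrite !big_cons.
have h1 := hsub w.
have h2 : \bigcup_(w' <- l) Rf w' \subset B1.
  elim/big_ind: _ => [|X Y hX hY|w' _].
  - exact: sub0set.
  - by rewrite subUset hX.
  - exact: hsub.
have h3 : [disjoint Rf w & \bigcup_(w' <- l) Rf w'].
  rewrite -setI_eq0 big_seq.
  elim/big_ind: _ => [|X Y /eqP hX /eqP hY|w' hw'].
  - by rewrite setI0.
  - by rewrite setIUr hX hY setU0.
  rewrite setI_eq0; apply: hdis.
  by apply/eqP => ew; move: hw; rewrite ew hw'.
apply: leq_trans (D_row2 C h1 h2 h3) _.
by rewrite leq_add2l IH.
Qed.

Lemma D_const (R C : {set E}) : R \subset B1 ->
  (forall x, x \in R -> forall y1 y2, y1 \in C -> y2 \in C -> a y1 x = a y2 x) ->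
  (Dr R C <= 1)%N.
Proof.
move=> hR hc.
case: (set_0Vmem C) => [->|[y0 hy0]]; first by rewrite D_set0.
set S := spanS (B1 :\: R).
set w := \sum_(x in R) a y0 x *: v x.
have hC : (spanS C <= <[w]> + S)%VS.
  apply: spanS_subP => y hy.
  rewrite (expand y) (bigID (fun x => x \in R)) /=.
  apply: memvD.
    apply: (subvP (addvSl _ _)).
    have -> : \sum_(i in B1 | i \in R) a y i *: v i = w.
      rewrite /w; apply: eq_big => [x|x hx].
        by rewrite andb_idl // => /(subsetP hR).
      by rewrite (hc x _ y y0) //; case/andP: hx.
    exact: memv_line.
  apply: (subvP (addvSr _ _)); apply: memv_suml => x /andP [hx hnx].
  by apply: memvZ; apply: memS; rewrite inE hnx.
rewrite /Dr -/S.
have h1 : (\dim (spanS C + S) <= \dim (<[w]> + S))%N.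
  by apply: dimvS; rewrite subv_add hC addvSr.
have h2 : (\dim (<[w]> + S) <= \dim <[w]> + \dim S)%N by apply: dimv_add_leqif.
have h3 : (\dim <[w]> <= 1)%N by rewrite dim_vline; case: (w != 0).
lia.
Qed.

Lemma D_init (B2 : {set E}) : col_basis v B2 ->
  (#|B1 :\: B2| <= Dr (B1 :\: B2) (B2 :\: B1))%N.
Proof.
move=> hB2; rewrite /Dr.
set S := spanS (B1 :\: (B1 :\: B2)).
have h1 : (#|B2| <= \dim (spanS (B2 :\: B1) + S))%N.
  rewrite -(basis_dim hB2); apply: dimvS; apply: spanS_subP => e he.
  case: (boolP (e \in B1)) => hb.
    by apply: (subvP (addvSr _ _)); apply: memS; rewrite !inE hb he.
  by apply: (subvP (addvSl _ _)); apply: memS; rewrite !inE hb he.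
have h2 : (\dim S <= #|B1 :\: (B1 :\: B2)|)%N := dim_spanS _.
have h3 : #|B1 :\: (B1 :\: B2)| = (#|B1| - #|B1 :\: B2|)%N.
  by rewrite cardsD (setIidPr (subsetDl _ _)).
have h4 := basis_card hB1 hB2.
have h5 : (#|B1 :\: B2| <= #|B1|)%N by apply: subset_leq_card; apply: subsetDl.
lia.
Qed.

End Coord.

End Mat.

Fixpoint need (q N : nat) : nat :=
  if N is N'.+1 then (q * (q * need q N' + 1) + 2)%N else 0%N.

Lemma need_step q N D0 D1 D2 D3 : (0 < q)%N ->
  (need q N.+1 <= D0)%N -> (D0 <= q * D1)%N -> (D1 <= D2.+1)%N ->
  (D2 <= q * D3)%N -> (need q N <= D3)%N.
Proof.
move=> /= hq h0 h1 h2 h3; set m := need q N in h0 *.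
rewrite leqNgt; apply/negP => hlt.
have [m' em] : exists m', m = m'.+1 by exists m.-1; lia.
rewrite em in h0 hlt.
have h4 : (D3 <= m')%N by lia.
have h5 : (q * D3 <= q * m')%N by apply: leq_mul.
have h6 : (q * D1 <= q * (q * m' + 1))%N by apply: leq_mul => //; lia.
have h7 : (q * (q * m' + 1) <= q * (q * m'.+1 + 1))%N.
  by apply: leq_mul => //; rewrite leq_add2r leq_mul2l ltnW ?orbT.
lia.
Qed.

Lemma sum_le_const (T : eqType) (l : seq T) (f : T -> nat) M :
  (forall w, w \in l -> f w <= M)%N -> (\sum_(w <- l) f w <= size l * M)%N.
Proof.
elim: l => [|w l IH] h; first by rewrite big_nil.
rewrite big_cons /= mulSn leq_add // ?h ?mem_head // IH // => w' hw'.
by apply: h; rewrite inE hw' orbT.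
Qed.

Lemma avg (T : eqType) (l : seq T) (f : T -> nat) N : (0 < N)%N ->
  (N <= \sum_(w <- l) f w)%N -> exists2 w, w \in l & (N <= size l * f w)%N.
Proof.
move=> hN hS.
case: (boolP (has (fun w => N <= size l * f w)%N l)) => [/hasP [w hw h]|].
  by exists w.
move/hasPn => hall.
have h1 : (\sum_(w <- l) (size l * f w) <= size l * (N - 1))%N.
  by apply: sum_le_const => w /hall; rewrite -ltnNge; lia.
rewrite -big_distrr /= in h1.
have hs : size l = 0%N.
  have h2 : (size l * N <= size l * \sum_(w <- l) f w)%N by apply: leq_mul.
  nia.
by move: hS; case: l hs {hall h1} => // _; rewrite big_nil leqn0 => /eqP h; move: hN; rewrite h.
Qed.

Lemma size_ie (T : finType) : size (index_enum T) = #|T|.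
Proof. by rewrite cardT -(deprecated_filter_index_enum predT) filter_predT. Qed.

Section Greedy.
Variables (F : finFieldType) (n : nat) (E : finType) (v : E -> 'rV[F]_n).
Variables (B1 : {set E}) (hB1 : col_basis v B1) (x0 : E).
Local Notation aa := (a v B1).
Local Notation D := (Dr v B1).

Lemma nonconst (R C : {set E}) : R \subset B1 -> (2 <= D R C)%N ->
  exists x y1 y2, [/\ x \in R, y1 \in C, y2 \in C & aa y1 x != aa y2 x].
Proof.
move=> hR h2.
case: (boolP [exists x in R, [exists y1 in C, [exists y2 in C, aa y1 x != aa y2 x]]]).
  move/existsP => [x /andP [hx /existsP [y1 /andP [h1 /existsP [y2 /andP [h3 h4]]]]]].
  by exists x, y1, y2.
move/existsPn => hn.
have : (D R C <= 1)%N.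
  apply: (D_const hB1 hR) => x hx y1 y2 h1 h3; apply/eqP.
  move: (hn x); rewrite hx /= => /existsPn /(_ y1); rewrite h1 /=.
  by move/existsPn/(_ y2); rewrite h3 /= negbK.
by move=> h; move: h2; rewrite leqNgt ltnS h.
Qed.

Lemma greedy N : forall R C : {set E}, R \subset B1 ->
  (need #|F| N <= D R C)%N ->
  exists xs ys (cs ds : seq F),
  [/\ size xs = N, size ys = N, size cs = N & size ds = N] /\
  [/\ uniq xs, {subset xs <= R}, {subset ys <= C},
      forall i j, (i < j)%N -> (j < N)%N ->
        aa (nth x0 ys j) (nth x0 xs i) = nth 0 cs i /\
        aa (nth x0 ys i) (nth x0 xs j) = nth 0 ds i
    & forall i, (i < N)%N -> aa (nth x0 ys i) (nth x0 xs i) != nth 0 cs i].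
Proof.
elim: N => [|N IH] R C hR hD.
  by exists [::], [::], [::], [::]; split; split => // i j; rewrite ltn0.
have q0 : (0 < #|F|)%N by apply/card_gt0P; exists 0.
have h2 : (2 <= D R C)%N by apply: leq_trans hD; rewrite /= leq_addl.
have [x [y1 [y2 [hx hy1 hy2 hne]]]] := nonconst hR h2.
pose Cc (w : F) := [set y in C | aa y x == w].
have hCU : C = \bigcup_(w : F) Cc w.
  apply/setP => y; apply/idP/bigcupP => [hy|[w _]].
    by exists (aa y x) => //; rewrite inE hy eqxx.
  by rewrite inE => /andP [].
have hDC : (D R C <= \sum_(w : F) D R (Cc w))%N.
  by rewrite {1}hCU; apply: D_col_big.
have [c _ hc] := avg (leq_trans (isT : (0 < 2)%N) h2) hDC.
rewrite size_ie in hc.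
pose y := if aa y1 x != c then y1 else y2.
have hy : y \in C by rewrite /y; case: ifP.
have hyx : aa y x != c.
  rewrite /y; case: ifP => // /negbFE /eqP <-; by rewrite eq_sym.
pose R0 := R :\ x.
have hR0 : R0 \subset B1 by apply: subset_trans hR; apply: subD1set.
have hrm : (D R (Cc c) <= (D R0 (Cc c)).+1)%N by apply: D_rm.
pose Rr (w : F) := [set x' in R0 | aa y x' == w].
have hRU : R0 = \bigcup_(w : F) Rr w.
  apply/setP => x'; apply/idP/bigcupP => [hx'|[w _]].
    by exists (aa y x') => //; rewrite inE hx' eqxx.
  by rewrite inE => /andP [].
have hDR : (D R0 (Cc c) <= \sum_(w : F) D (Rr w) (Cc c))%N.
  rewrite {1}hRU; apply: D_row_big => //.
  - exact: index_enum_uniq.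
  - by move=> w; apply: subset_trans hR0; apply/subsetP => z; rewrite inE => /andP [].
  - move=> w w' hww; rewrite -setI_eq0; apply/eqP/setP => z; rewrite !inE.
    apply/negP => /andP [/andP [_ /eqP e1] /andP [_ /eqP e2]].
    by move: hww; rewrite -e1 -e2 eqxx.
case: (posnP (D R0 (Cc c))) => hpos.
  exfalso.
  have e : need #|F| N.+1 = (#|F| * (#|F| * need #|F| N + 1) + 2)%N by [].
  rewrite e in hD.
  have h3 : (D R (Cc c) <= 1)%N by rewrite hpos in hrm.
  have hle : (D R C <= #|F|)%N.
    by apply: (leq_trans hc); rewrite -{2}(muln1 #|F|) leq_mul2l h3 orbT.
  have h4 : (#|F| * (#|F| * need #|F| N + 1) + 2 <= #|F|)%N by lia.
  have h5 : (#|F| <= #|F| * (#|F| * need #|F| N + 1))%N.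
    by rewrite -{1}(muln1 #|F|) leq_mul2l addn1 ltn0Sn orbT.
  lia.
have [d _ hd] := avg hpos hDR.
rewrite size_ie in hd.
have hN : (need #|F| N <= D (Rr d) (Cc c))%N.
  by apply: (need_step q0 hD hc hrm hd).
have hRd : Rr d \subset B1.
  by apply: subset_trans hR0; apply/subsetP => z; rewrite inE => /andP [].
have [xs [ys [cs [ds [[s1 s2 s3 s4] [hu hxs hys hij hii]]]]]] := IH _ _ hRd hN.
exists (x :: xs), (y :: ys), (c :: cs), (d :: ds); split.
  by split; rewrite /= ?s1 ?s2 ?s3 ?s4.
have hxs' : forall z, z \in xs -> z \in Rr d by [].
have hys' : forall z, z \in ys -> z \in Cc c by [].
split.
- by rewrite /= hu andbT; apply/negP => /hxs'; rewrite !inE eqxx.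
- move=> z; rewrite inE => /orP [/eqP -> //|/hxs']; rewrite !inE.
  by case/andP => /andP [_ ->].
- move=> z; rewrite inE => /orP [/eqP -> //|/hys']; rewrite !inE.
  by case/andP.
- move=> [|i] [|j] //= hij' hj.
    have hjN : (j < N)%N by [].
    have hyj : nth x0 ys j \in Cc c by apply: hys'; rewrite mem_nth // s2.
    have hxj : nth x0 xs j \in Rr d by apply: hxs'; rewrite mem_nth // s1.
    move: hyj hxj; rewrite !inE => /andP [_ /eqP ->] /andP [_ /eqP ->].
    by split.
  by apply: hij.
- by move=> [|i] //= hi; apply: hii.
Qed.

End Greedy.

Lemma div_block s k i : (0 < s)%N -> (k * s <= i < k * s + s)%N -> (i %/ s)%N = k.
Proof.
move=> hs /andP [h1 h2].
have -> : i = (k * s + (i - k * s))%N by lia.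
by rewrite divnMDl // divn_small ?addn0 //; lia.
Qed.

Lemma count_div s k (P : pred nat) : (0 < s)%N ->
  (count (fun i => P (i %/ s)) (iota 0 (k * s)) = s * count P (iota 0 k))%N.
Proof.
move=> hs; elim: k => [|k IH]; first by rewrite mul0n muln0.
rewrite mulSnr iotaD count_cat IH add0n -addn1 iotaD count_cat /= addn0 add0n.
rewrite mulnDr; congr (_ + _)%N.
rewrite (@eq_in_count _ _ (fun _ => P k)); last first.
  by move=> i; rewrite mem_iota => /(div_block hs) ->.
by case: (P k); rewrite ?(count_predT (iota _ _)) ?count_pred0 ?size_iota /= ?muln1 ?muln0.
Qed.

Lemma sorted_mono (I : seq nat) : sorted ltn I -> forall m j,
  (m < size I)%N -> (j < size I)%N ->
  ((nth 0%N I m < nth 0%N I j) = (m < j))%N /\ ((nth 0%N I m == nth 0%N I j) = (m == j)).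
Proof.
move=> hI m j hm hj.
have homo := sorted_ltn_nth ltn_trans 0%N hI.
have [lt|gt|->] := ltngtP m j.
- have := homo m j hm hj lt => h; split => //; lia.
- have := homo j m hj hm gt => h; split; lia.
- by rewrite ltnn eqxx.
Qed.

Lemma Mx_mono (K : fieldType) (al be ga : K) (I : seq nat) : sorted ltn I -> forall m j,
  (m < size I)%N -> (j < size I)%N ->
  Mx al be ga (nth 0%N I m) (nth 0%N I j) = Mx al be ga m j.
Proof.
move=> hI m j hm hj; have [h1 h2] := sorted_mono hI hm hj.
by rewrite /Mx h1 h2.
Qed.

Section Final.
Variables (F : finFieldType) (n : nat) (E : finType) (v : E -> 'rV[F]_n).
Variables (B1 B2 : {set E}) (hB1 : col_basis v B1) (x0 : E).
Variables (Bs : {set {set E}}) (hBs : forall B, B \in Bs <-> col_basis v B).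
Local Notation aa := (a v B1).

Definition Str (xs ys : seq E) (al be ga : F) :=
  size ys = size xs /\ forall i j, (i < size xs)%N -> (j < size xs)%N ->
    aa (nth x0 ys j) (nth x0 xs i) = Mx al be ga i j.

Lemma Str_uniq xs ys al be ga : Str xs ys al be ga -> ga != be -> uniq ys.
Proof.
move=> [hs hS] hgb; apply/(uniqP x0) => i j; rewrite !inE hs => hi hj e.
have key : forall i j, (i < size xs)%N -> (j < size xs)%N -> (i < j)%N ->
    nth x0 ys i = nth x0 ys j -> False.
  move=> i' j' hi' hj' lt e'.
  have := hS j' i' hj' hi'; have := hS j' j' hj' hj'; rewrite e' => ->.
  rewrite /Mx ltnn eqxx (_ : (j' < i')%N = false); last by lia.
  rewrite (_ : (j' == i') = false); last by lia.
  by move=> hh; move: hgb; rewrite hh eqxx.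
have [lt|gt|//] := ltngtP i j.
  by exfalso; apply: (key i j).
by exfalso; apply: (key j i) => //.
Qed.

Lemma final k s xs ys al be ga : (0 < s)%N -> Str xs ys al be ga ->
  size xs = (k * s)%N -> uniq xs -> {subset xs <= B1 :\: B2} ->
  {subset ys <= B2 :\: B1} -> ga != be -> (ga == al -> ga != 0) ->
  (forall T, (s %| T)%N -> forall r : F, r != 0 -> \sum_(i < T) r ^+ i = 0) ->
  k_exchange Bs k B1 B2.
Proof.
move=> hs hStr hsz hux hxs hys hgb hga hgeo.
have huy := Str_uniq hStr hgb.
have hsy : size ys = (k * s)%N by case: hStr => -> .
set t := (k * s)%N in hsz hsy.
pose X (l : 'I_k) := [set x | x \in [seq nth x0 xs i | i <- [seq i <- iota 0 t | (i %/ s)%N == l]]].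
pose Y (l : 'I_k) := [set x | x \in [seq nth x0 ys i | i <- [seq i <- iota 0 t | (i %/ s)%N == l]]].
have hls : forall l : 'I_k, (l * s < t)%N.
  by move=> l; rewrite /t ltn_mul2r hs ltn_ord.
have hlsm : forall l : 'I_k, (l * s)%N \in [seq i <- iota 0 t | (i %/ s)%N == l].
  by move=> l; rewrite mem_filter mem_iota mulnK // eqxx hls.
have memI : forall (P : pred nat) i, i \in [seq i <- iota 0 t | P i] -> (i < t)%N /\ P i.
  by move=> P i; rewrite mem_filter mem_iota add0n /= => /andP [-> ->].
exists X, Y; split.
- move=> l; split.
    by apply/set0Pn; exists (nth x0 xs (l * s)); rewrite inE; apply: map_f.
  apply/subsetP => x; rewrite inE => /mapP [i /memI [hi _] ->].
  by apply: hxs; rewrite mem_nth // hsz.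
- move=> l; split.
    by apply/set0Pn; exists (nth x0 ys (l * s)); rewrite inE; apply: map_f.
  apply/subsetP => x; rewrite inE => /mapP [i /memI [hi _] ->].
  by apply: hys; rewrite mem_nth // hsy.
- move=> l l' hll; rewrite -setI_eq0; apply/eqP/setP => x; rewrite !inE.
  apply/negP => /andP [/mapP [i hi ->] /mapP [j hj]].
  move: hi hj => /memI [hi /eqP hi1] /memI [hj /eqP hj1].
  move/eqP; rewrite nth_uniq ?hsz // => /eqP eij.
  by move: hll; rewrite -val_eqE /= -hi1 -hj1 eij eqxx.
- move=> l l' hll; rewrite -setI_eq0; apply/eqP/setP => x; rewrite !inE.
  apply/negP => /andP [/mapP [i hi ->] /mapP [j hj]].
  move: hi hj => /memI [hi /eqP hi1] /memI [hj /eqP hj1].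
  move/eqP; rewrite nth_uniq ?hsy // => /eqP eij.
  by move: hll; rewrite -val_eqE /= -hi1 -hj1 eij eqxx.
move=> Z.
pose P (j : nat) := [exists l in Z, j == val l].
pose I := [seq i <- iota 0 t | P (i %/ s)%N].
have hIs : sorted ltn I by apply: sorted_filter; [exact: ltn_trans | exact: iota_ltn_sorted].
have hIu : uniq I by apply: filter_uniq; apply: iota_uniq.
have hIt : forall m, (m < size I)%N -> (nth 0%N I m < t)%N.
  by move=> m hm; have [] := memI _ _ (mem_nth 0%N hm).
pose XZ := \bigcup_(l in Z) X l.
pose YZ := \bigcup_(l in Z) Y l.
have mXZ : forall x, (x \in XZ) = (x \in [seq nth x0 xs i | i <- I]).
  move=> x; apply/bigcupP/mapP => [[l hl]|[i hi ->]].
    rewrite inE => /mapP [i /memI [hi /eqP hil] ->]; exists i => //.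
    rewrite mem_filter mem_iota add0n hi leq0n !andbT /P; apply/existsP; exists l.
    by rewrite hl hil eqxx.
  have [hit] := memI _ _ hi; rewrite /P => /existsP [l /andP [hl /eqP hil]].
  exists l => //; rewrite inE; apply: map_f.
  by rewrite mem_filter mem_iota add0n hit leq0n !andbT hil.
have mYZ : forall x, (x \in YZ) = (x \in [seq nth x0 ys i | i <- I]).
  move=> x; apply/bigcupP/mapP => [[l hl]|[i hi ->]].
    rewrite inE => /mapP [i /memI [hi /eqP hil] ->]; exists i => //.
    rewrite mem_filter mem_iota add0n hi leq0n !andbT /P; apply/existsP; exists l.
    by rewrite hl hil eqxx.
  have [hit] := memI _ _ hi; rewrite /P => /existsP [l /andP [hl /eqP hil]].
  exists l => //; rewrite inE; apply: map_f.
  by rewrite mem_filter mem_iota add0n hit leq0n !andbT hil.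
have c3 : XZ \subset B1.
  apply/subsetP => x; rewrite mXZ => /mapP [i /memI [hi _] ->].
  have hin : nth x0 xs i \in xs by rewrite mem_nth // hsz.
  by have := hxs _ hin; rewrite inE => /andP [].
have uXZ : uniq [seq nth x0 xs i | i <- I].
  rewrite map_inj_in_uniq // => i j /memI [hi _] /memI [hj _] /eqP.
  by rewrite nth_uniq ?hsz // => /eqP.
have c1 : #|XZ| = size I.
  by rewrite (eq_card mXZ) (card_uniqP uXZ) size_map.
have c2 : (#|YZ| <= size I)%N.
  by rewrite (eq_card mYZ) (leq_trans (card_size _)) // size_map.
apply/hBs.
set T := (B1 :\: XZ) :|: YZ.
apply: (cbasis_of hB1).
  have h1 : (#|T| <= #|B1 :\: XZ| + #|YZ|)%N by rewrite /T cardsU leq_subr.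
  have h2 : #|B1 :\: XZ| = (#|B1| - #|XZ|)%N by rewrite cardsD (setIidPr c3).
  have h3 : (#|XZ| <= #|B1|)%N by apply: subset_leq_card.
  lia.
move=> e he; case: (boolP (e \in XZ)) => hx; last first.
  by apply: memS; rewrite !inE hx he.
rewrite mXZ in hx; case/mapP: hx => i hi ->.
have hm : (index i I < size I)%N by rewrite index_mem.
rewrite -(nth_index 0%N hi).
have := @recover _ _ (spanS v T) (fun m => v (nth x0 xs (nth 0%N I m))) (size I) al be ga hgb hga.
apply => //.
  apply: hgeo; rewrite size_filter /I count_div //; apply: dvdn_mulr; exact: dvdnn.
move=> j hj.
set y := nth x0 ys (nth 0%N I j).
have hyT : y \in T by rewrite /T !inE mYZ; apply/orP; right; apply: map_f; apply: mem_nth.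
have hvy := memS v hyT.
rewrite (expand hB1 y) (bigID (fun x => x \in XZ)) /= in hvy.
have h2 : \sum_(x in B1 | x \notin XZ) aa y x *: v x \in spanS v T.
  apply: memv_suml => x /andP [hx1 hx2]; apply: memvZ; apply: memS.
  by rewrite /T !inE hx1 hx2.
have h1 : \sum_(x in B1 | x \in XZ) aa y x *: v x =
    \sum_(m < size I) Mx al be ga m j *: v (nth x0 xs (nth 0%N I m)).
  rewrite (eq_bigl (fun x => x \in [seq nth x0 xs i | i <- I])); last first.
    by move=> x; rewrite -mXZ andb_idl // => /(subsetP c3).
  rewrite -big_uniq // big_map (big_nth 0%N) big_mkord.
  apply: eq_bigr => m _.
  have hmI : (m < size I)%N by [].
  case: hStr => _ hS.
  by rewrite /y hS ?hsz ?hIt // Mx_mono.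
rewrite -h1.
by have := memvB hvy h2; rewrite addrK.
Qed.

End Final.

Lemma sum_count (T : finType) (s : seq nat) (col : nat -> T) :
  (\sum_(k : T) count (fun i => col i == k) s)%N = size s.
Proof.
elim: s => [|i s IH] /=; first by rewrite big1.
rewrite big_split /= IH (bigD1 (col i)) //= eqxx big1 ?addn0 ?add1n // => k hk.
by rewrite eq_sym (negbTE hk).
Qed.

Section Trans.
Variables (F : finFieldType) (n : nat) (E : finType) (v : E -> 'rV[F]_n).
Variables (B1 : {set E}) (x0 : E).
Local Notation aa := (a v B1).
Local Notation Str := (Str v B1 x0).

Lemma Str_rev xs ys al be ga : Str xs ys al be ga -> Str (rev xs) (rev ys) be al ga.
Proof.
move=> [hs hS]; split; first by rewrite !size_rev.
move=> i j; rewrite size_rev => hi hj.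
rewrite !nth_rev ?hs // hS; try lia.
rewrite /Mx.
have [lt|gt|->] := ltngtP i j.
- rewrite (_ : ((size xs - i.+1) < (size xs - j.+1))%N = false); last by lia.
  by rewrite (_ : ((size xs - i.+1)%N == (size xs - j.+1)%N) = false); last by lia.
- rewrite (_ : ((size xs - i.+1) < (size xs - j.+1))%N = true) //; lia.
- by rewrite ltnn eqxx.
Qed.

Lemma Str_shift xs ys al be : Str xs ys al be be ->
  Str (take (size xs).-1 xs) (drop 1 ys) al be al.
Proof.
move=> [hs hS]; split; first by rewrite size_drop size_take_min hs; lia.
move=> i j; rewrite size_take_min => hi hj.
rewrite nth_drop nth_take; last by lia.
rewrite hS; try lia.
rewrite /Mx add1n.
have [lt|gt|->] := ltngtP i j.
- by rewrite (_ : (i < j.+1)%N = true); last by lia.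
- rewrite (_ : (i < j.+1)%N = false); last by lia.
  by case: eqP.
- by rewrite ltnSn.
Qed.

Lemma Str_take m xs ys al be ga : (m <= size xs)%N -> Str xs ys al be ga ->
  Str (take m xs) (take m ys) al be ga.
Proof.
move=> hm [hs hS]; split; first by rewrite !size_take hs.
move=> i j; rewrite size_take_min => hi hj.
by rewrite !nth_take; try lia; apply: hS; lia.
Qed.

Lemma pigeon N M xs ys (cs ds : seq F) : size xs = N -> size ys = N ->
  (forall i j, (i < j)%N -> (j < N)%N ->
        aa (nth x0 ys j) (nth x0 xs i) = nth 0 cs i /\
        aa (nth x0 ys i) (nth x0 xs j) = nth 0 ds i) ->
  (forall i, (i < N)%N -> aa (nth x0 ys i) (nth x0 xs i) != nth 0 cs i) ->
  uniq xs -> (#|F| ^ 3 * M <= N)%N -> (0 < M)%N ->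
  exists xs' ys' (c d g : F),
    [/\ Str xs' ys' c d g, (M <= size xs')%N, uniq xs', {subset xs' <= xs}
      & {subset ys' <= ys}] /\ g != c.
Proof.
move=> hx hy hij hii hu hN hM.
pose col i := (nth 0 cs i, nth 0 ds i, aa (nth x0 ys i) (nth x0 xs i)).
have q0 : (0 < #|F|)%N by apply/card_gt0P; exists 0.
have hS := sum_count (iota 0 N) col.
rewrite size_iota in hS.
have N0 : (0 < N)%N.
  by apply: leq_trans hN; rewrite muln_gt0 hM expn_gt0 q0.
have [[[c d] g] _ hk] := avg (f := fun k => count (fun i => col i == k) (iota 0 N)) N0 (eq_leq (esym hS)).
rewrite size_ie !card_prod in hk.
set J := [seq i <- iota 0 N | col i == (c, d, g)].
have hJ : (M <= size J)%N.
  rewrite size_filter; rewrite -(@leq_pmul2l (#|F| ^ 3)) ?expn_gt0 ?q0 //.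
  apply: leq_trans hN _; apply: leq_trans hk _; rewrite expnS expnS expn1 mulnA //.
have hJs : sorted ltn J by apply: sorted_filter; [exact: ltn_trans | exact: iota_ltn_sorted].
have hJu : uniq J by apply: filter_uniq; apply: iota_uniq.
have memJ : forall m, (m < size J)%N -> (nth 0%N J m < N)%N /\ col (nth 0%N J m) = (c, d, g).
  move=> m hm; have := mem_nth 0%N hm; rewrite mem_filter mem_iota add0n leq0n /=.
  by case/andP => /eqP -> ->.
exists [seq nth x0 xs i | i <- J], [seq nth x0 ys i | i <- J], c, d, g.
split; last first.
  have J0 : (0 < size J)%N by apply: leq_trans hJ.
  have [h1 h2] := memJ 0%N J0.
  by move: (hii _ h1); rewrite /col in h2; case: h2 => <- _ ->.
split.
- split; first by rewrite !size_map.
  move=> m m'; rewrite size_map => hm hm'.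
  rewrite !(nth_map 0%N) //.
  have [i1 c1] := memJ m hm; have [i2 c2] := memJ m' hm'.
  have [o1 o2] := sorted_mono hJs hm hm'.
  rewrite /Mx -o1 -o2.
  case: (ltngtP (nth 0%N J m) (nth 0%N J m')) => [lt|gt|eq].
  + by have [-> _] := hij _ _ lt i2; rewrite /col in c1; case: c1.
  + by have [_ ->] := hij _ _ gt i1; rewrite /col in c2; case: c2.
  + by rewrite -eq; rewrite /col in c1; case: c1.
- by rewrite size_map.
- rewrite map_inj_in_uniq // => i j; rewrite !mem_filter !mem_iota !add0n !leq0n /=.
  move=> /andP [_ hi] /andP [_ hj] /eqP.
  by rewrite nth_uniq ?hx // => /eqP.
- move=> z /mapP [i]; rewrite mem_filter mem_iota add0n leq0n /= => /andP [_ hi] ->.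
  by rewrite mem_nth // hx.
- move=> z /mapP [i]; rewrite mem_filter mem_iota add0n leq0n /= => /andP [_ hi] ->.
  by rewrite mem_nth // hy.
Qed.

End Trans.

Lemma geo (F : finFieldType) p e : prime p -> (0 < e)%N -> #|F| = (p ^ e)%N ->
  forall T, (#|F| * (#|F| - 1) %| T)%N -> forall r : F, r != 0 -> \sum_(i < T) r ^+ i = 0.
Proof.
move=> pp e0 hF T /dvdnP [m ->] r rnz.
have pc := card_finPcharP hF pp.
have q0 : (#|F|%:R : F) = 0 by rewrite hF natrX (pcharf0 pc) expr0n (gtn_eqF e0).
have r1 : r ^+ (#|F| - 1) = 1.
  apply: (mulIf rnz); rewrite mul1r -exprSr.
  have -> : (#|F| - 1).+1 = #|F|.
    have : (0 < #|F|)%N by apply/card_gt0P; exists 0.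
    lia.
  exact: expf_card.
have [->|rn1] := eqVneq r 1.
  rewrite (eq_bigr (fun _ => 1)) => [|i _]; last by rewrite expr1n.
  by rewrite sumr_const card_ord !natrM q0 mul0r mulr0.
have h := subrX1 r (m * (#|F| * (#|F| - 1)))%N.
have e1 : (m * (#|F| * (#|F| - 1)))%N = ((#|F| - 1) * (m * #|F|))%N.
  by rewrite [RHS]mulnC -mulnA.
rewrite e1 exprM r1 expr1n subrr in h.
have : (r - 1) * \sum_(i < (#|F| - 1) * (m * #|F|)) r ^+ i == 0 by rewrite -h.
rewrite mulf_eq0 subr_eq0 (negbTE rn1) /= => /eqP.
by rewrite -e1.
Qed.

Lemma need_ge2 q N : (0 < N)%N -> (2 <= need q N)%N.
Proof. by case: N => // N' _ /=; rewrite leq_addl. Qed.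

Definition fbound (q k : nat) : nat :=
  need q (q ^ 3 * (k * (q * (q - 1)) + 1))%N.

Theorem theorem5p14 :
  exists f : nat -> nat -> nat,
    forall q : nat, prime_power q ->
    forall k : nat, (0 < k)%N ->
    forall (F : finFieldType), #|F| = q ->
    forall (E : finType) (Bs : {set {set E}}),
      representable_over F Bs ->
      weakly_base_orderable Bs (f q k) k.
Proof.
exists fbound => q [p [e [pp e0 hq]]] k hk F hF E Bs [n [v hv]] B1 B2 hB1 hB2 hsz.
have cb1 : col_basis v B1 by apply/hv.
have cb2 : col_basis v B2 by apply/hv.
have p2 : (2 <= p)%N by apply: prime_gt1.
have q2 : (2 <= q)%N.
  rewrite hq; case: e e0 {hq} => // e' _; rewrite expnS.
  by apply: (leq_trans p2); rewrite leq_pmulr // expn_gt0 (ltnW p2).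
set s := (q * (q - 1))%N.
have s0 : (0 < s)%N by rewrite /s muln_gt0; apply/andP; split; lia.
set M := (k * s + 1)%N.
set N := (q ^ 3 * M)%N.
have hD : (need q N <= Dr v B1 (B1 :\: B2) (B2 :\: B1))%N.
  by apply: leq_trans hsz (D_init cb1 cb2).
have N1 : (0 < N)%N by rewrite /N muln_gt0 expn_gt0 /M addn1 /=; lia.
have hne : (0 < #|B1 :\: B2|)%N.
  apply: leq_trans hsz; rewrite /fbound -/s -/M -/N.
  by apply: (leq_trans _ (need_ge2 q N1)).
have [x0 _] := card_gt0P hne.
have hD' : (need #|F| N <= Dr v B1 (B1 :\: B2) (B2 :\: B1))%N by rewrite hF.
have [xs [ys [cs [ds [[s1 s2 s3 s4] [hu hxs hys hij hii]]]]]] :=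
  greedy cb1 x0 (subsetDl B1 B2) hD'.
have hNM : (#|F| ^ 3 * M <= N)%N by rewrite hF.
have M0 : (0 < M)%N by rewrite /M addn1.
have [xs1 [ys1 [c [d [g [[hS1 hM1 hu1 hx1 hy1] hgc]]]]]] := pigeon s1 s2 hij hii hu hNM M0.
have key : exists xs2 ys2 (al be ga : F),
    [/\ Str v B1 x0 xs2 ys2 al be ga, (k * s <= size xs2)%N, uniq xs2,
        {subset xs2 <= B1 :\: B2} & {subset ys2 <= B2 :\: B1}] /\
    (ga != be /\ (ga == al -> ga != 0)).
  have hx1' : {subset xs1 <= B1 :\: B2} by move=> z /hx1 /hxs.
  have hy1' : {subset ys1 <= B2 :\: B1} by move=> z /hy1 /hys.
  case: (eqVneq g d) => [egd|ngd].
    case: (eqVneq g 0) => [g0|gn0].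
      rewrite -egd in hS1.
      exists (take (size xs1).-1 xs1), (drop 1 ys1), c, g, c; split; last first.
        split; first by rewrite eq_sym.
        by move=> _; rewrite -g0 eq_sym.
      split.
      - exact: Str_shift.
      - by rewrite size_take_min; move: hM1; rewrite /M; lia.
      - exact: take_uniq.
      - by move=> z /mem_take /hx1'.
      - by move=> z /mem_drop /hy1'.
    exists (rev xs1), (rev ys1), d, c, g; split; last first.
      split => //; by move=> _.
    split.
    - exact: Str_rev.
    - by rewrite size_rev; move: hM1; rewrite /M; lia.
    - by rewrite rev_uniq.
    - by move=> z; rewrite mem_rev => /hx1'.
    - by move=> z; rewrite mem_rev => /hy1'.
  exists xs1, ys1, c, d, g; split; last first.
    by split => // /eqP egc; move: hgc; rewrite egc eqxx.
  split => //; move: hM1; rewrite /M; lia.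
have [xs2 [ys2 [al [be [ga [[hS2 hk2 hu2 hx2 hy2] [hgb hga]]]]]]] := key.
apply: (final cb1 hv (x0 := x0) (al := al) (be := be) (ga := ga) (k := k) (s := s) (xs := take (k * s) xs2) (ys := take (k * s) ys2)) => //.
- exact: Str_take.
- by rewrite size_take_min; lia.
- exact: take_uniq.
- by move=> z /mem_take /hx2.
- by move=> z /mem_take /hy2.
- by move=> T hT r rnz; apply: (geo pp e0 (etrans hF hq)) => //; rewrite hF.
Qed.
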